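(* For every $k\geq1$, a word of $\widetilde A'_k$ and a word of $\widetilde B'_k$ never overlap (in either order, for any shift $0<s<\ell'_k$). Similarly, for every $k\geq0$, a word of $\widetilde A_k$ and a word of $\widetilde B_k$ never overlap (in either order, for any shift $0<s<\ell_k$).
   Context: Alphabet $\{0,1,2\}$. Let $(N_k)_{k\geq1}$ be integers with $N_k\geq4$, $\ell_0=2$, $\ell_k=N_k\ell_{k-1}$; let $N'_k\geq2$ be integers dividing $N_k$ with $N_k/N'_k\geq2$, and $\ell'_k=N'_k\ell_{k-1}$. Words: $a_0=01$, $b_0=02$; for odd $k\geq1$, $a_k=(a_{k-1})^{N_k}$ and $b_k=b_{k-1}2^{(N_k-2)\ell_{k-1}}b_{k-1}$; for even $k\geq2$, $a_k=a_{k-1}1^{(N_k-2)\ell_{k-1}}a_{k-1}$ and $b_k=(b_{k-1})^{N_k}$. $\widetilde A_k=\{a_k,1^{\ell_k}\}$, $\widetilde B_k=\{b_k,2^{\ell_k}\}$. Intermediate dictionaries: for odd $k$, $\widetilde A'_k=\{a'_k,1^{\ell'_k}\}$ with $a'_k=(a_{k-1})^{N'_k}$, and $\widetilde B'_k=\{b'_k,b''_k,2^{\ell'_k}\}$ with $b'_k=b_{k-1}2^{(N'_k-1)\ell_{k-1}}$, $b''_k=2^{(N'_k-1)\ell_{k-1}}b_{k-1}$; for even $k$, $\widetilde A'_k=\{a'_k,a''_k,1^{\ell'_k}\}$ with $a'_k=a_{k-1}1^{(N'_k-1)\ell_{k-1}}$, $a''_k=1^{(N'_k-1)\ell_{k-1}}a_{k-1}$,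 and $\widetilde B'_k=\{b'_k,2^{\ell'_k}\}$ with $b'_k=(b_{k-1})^{N'_k}$. Two words $u,v$ of the same length $\ell$ are said to overlap, with $u$ followed by $v$ at shift $s$ ($0<s<\ell$), if the terminal segment of length $\ell-s$ of $u$ equals the initial segment of length $\ell-s$ of $v$. *)

(* Defs.v *)
From mathcomp Require Import all_boot.
Set Implicit Arguments. Unset Strict Implicit. Unset Printing Implicit Defensive.

(* Words over the alphabet {0,1,2} are represented as seq nat (letters 0,1,2). *)
Definition word := seq nat.

Fixpoint ell (N : nat -> nat) (k : nat) : nat :=
  match k with
  | 0 => 2
  | k'.+1 => N k'.+1 * ell N k'
  end.

Definition ell' (N N' : nat -> nat) (k : nat) : nat := N' k * ell N k.-1.

Definition wpow (u : word) (n : nat) : word := flatten (nseq n u).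

Fixpoint ab (N : nat -> nat) (k : nat) : word * word :=
  match k with
  | 0 => ([:: 0; 1], [:: 0; 2])
  | k'.+1 =>
      let a := (ab N k').1 in
      let b := (ab N k').2 in
      let n := N k'.+1 in
      let l := ell N k' in
      if odd k'.+1 then (wpow a n, b ++ nseq ((n - 2) * l) 2 ++ b)
      else (a ++ nseq ((n - 2) * l) 1 ++ a, wpow b n)
  end.

Definition a_ N k := (ab N k).1.
Definition b_ N k := (ab N k).2.

Definition At (N : nat -> nat) k : seq word := [:: a_ N k; nseq (ell N k) 1].
Definition Bt (N : nat -> nat) k : seq word := [:: b_ N k; nseq (ell N k) 2].

Definition At' (N N' : nat -> nat) k : seq word :=
  let a := a_ N k.-1 in let l := ell N k.-1 in let n' := N' k in
  if odd k then [:: wpow a n'; nseq (ell' N N' k) 1]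
  else [:: a ++ nseq ((n' - 1) * l) 1; nseq ((n' - 1) * l) 1 ++ a;
           nseq (ell' N N' k) 1].

Definition Bt' (N N' : nat -> nat) k : seq word :=
  let b := b_ N k.-1 in let l := ell N k.-1 in let n' := N' k in
  if odd k then [:: b ++ nseq ((n' - 1) * l) 2; nseq ((n' - 1) * l) 2 ++ b;
                 nseq (ell' N N' k) 2]
  else [:: wpow b n'; nseq (ell' N N' k) 2].

Definition overlap (l : nat) (u v : word) (s : nat) : Prop :=
  drop (size u - (l - s)) u = take (l - s) v.

(* Main.v *)
Require Import Defs.
From mathcomp Require Import all_boot.
Set Implicit Arguments.

Definition P (c d : nat) (u : word) : bool :=
  [&& u != [::], last 0 u == c & d \notin u].

Lemma P_catl c d x y : d \notin x -> P c d y -> P c d (x ++ y).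
Proof.
move=> hx /and3P [hy hl hd]; apply/and3P; split.
- by case: x {hx} => //.
- rewrite last_cat; case: y hy hl {hd} => //.
- by rewrite mem_cat negb_or hx.
Qed.

Lemma P_notin c d u : P c d u -> d \notin u.
Proof. by case/and3P. Qed.

Lemma P_nseq c d n : 0 < n -> c != d -> P c d (nseq n c).
Proof.
case: n => // n _ hcd; apply/and3P; split => //.
- by elim: n => //= n IH.
- by rewrite mem_nseq negb_and eq_sym hcd orbT.
Qed.

Lemma P_wpow c d a n : 0 < n -> P c d a -> P c d (wpow a n).
Proof.
case: n => // n _ ha; elim: n => [|n IH].
- by rewrite /wpow /= cats0.
- rewrite /wpow /=; apply: P_catl; [exact: (P_notin _ _ _ ha) | exact: IH].
Qed.

Lemma no_ov c d l u v s : P c d u -> P d c v -> s < l -> ~ overlap l u v s.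
Proof.
rewrite /overlap => /and3P [hu hl hd] /and3P [_ _ hc] hs heq.
case/lastP: u hu hl hd heq => // u' x _.
rewrite last_rcons => /eqP -> _.
have hm : 0 < l - s by rewrite subn_gt0.
rewrite size_rcons drop_rcons; last first.
  by rewrite leq_subLR addnC -addn1 leq_add2l.
move=> heq; move: hc; rewrite -(cat_take_drop (l - s) v) mem_cat -heq.
by rewrite mem_rcons inE eqxx.
Qed.

Lemma ell_pos N (hN : forall k, 1 <= k -> 4 <= N k) k : 0 < ell N k.
Proof.
elim: k => //= k IH; rewrite muln_gt0 IH andbT.
by apply: leq_trans (hN _ _).
Qed.

Lemma ab_P N (hN : forall k, 1 <= k -> 4 <= N k) k :
  P 1 2 (a_ N k) /\ P 2 1 (b_ N k).
Proof.
rewrite /a_ /b_; elim: k => [|k [IHa IHb]] //=.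
have hNk : 0 < N k.+1 by apply: leq_trans (hN _ _).
case: ifP => _ /=; split.
- exact: P_wpow.
- apply: P_catl; first exact: (P_notin _ _ _ IHb).
  apply: P_catl => //; by rewrite mem_nseq andbF.
- apply: P_catl; first exact: (P_notin _ _ _ IHa).
  apply: P_catl => //; by rewrite mem_nseq andbF.
- exact: P_wpow.
Qed.

Theorem lemma3p2 (N N' : nat -> nat)
  (hN : forall k, 1 <= k -> 4 <= N k)
  (hN' : forall k, 1 <= k -> 2 <= N' k)
  (hdvd : forall k, 1 <= k -> N' k %| N k)
  (hquo : forall k, 1 <= k -> 2 <= N k %/ N' k) :
  (forall k, 1 <= k ->
     forall u v, u \in At' N N' k -> v \in Bt' N N' k ->
     forall s, 0 < s < ell' N N' k ->
       ~ overlap (ell' N N' k) u v s /\ ~ overlap (ell' N N' k) v u s) /\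
  (forall k,
     forall u v, u \in At N k -> v \in Bt N k ->
     forall s, 0 < s < ell N k ->
       ~ overlap (ell N k) u v s /\ ~ overlap (ell N k) v u s).
Proof.
split.
- move=> k hk u v hu hv s /andP [_ hs].
  have hl := @ell_pos N hN k.-1.
  have hn' := hN' k hk.
  have he : 0 < ell' N N' k by rewrite /ell' muln_gt0 hl andbT; apply: leq_trans hn'.
  have hm : 0 < (N' k - 1) * ell N k.-1 by rewrite muln_gt0 hl subn_gt0 andbT.
  have [ha hb] := @ab_P N hN k.-1.
  have PU : P 1 2 u.
    move: hu; rewrite /At'; case: ifP => _; rewrite !inE.
    + case/orP => /eqP ->; [exact: P_wpow (ltnW hn') ha | exact: P_nseq].
    + case/or3P => /eqP ->.
      * apply: P_catl; [exact: (P_notin _ _ _ ha) | exact: P_nseq].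
      * apply: P_catl => //; by rewrite mem_nseq andbF.
      * exact: P_nseq.
  have PV : P 2 1 v.
    move: hv; rewrite /Bt'; case: ifP => _; rewrite !inE.
    + case/or3P => /eqP ->.
      * apply: P_catl; [exact: (P_notin _ _ _ hb) | exact: P_nseq].
      * apply: P_catl => //; by rewrite mem_nseq andbF.
      * exact: P_nseq.
    + case/orP => /eqP ->; [exact: P_wpow (ltnW hn') hb | exact: P_nseq].
  by split; [exact: no_ov PU PV hs | exact: no_ov PV PU hs].
- move=> k u v hu hv s /andP [_ hs].
  have hl := @ell_pos N hN k.
  have [ha hb] := @ab_P N hN k.
  have PU : P 1 2 u.
    by move: hu; rewrite !inE => /orP [] /eqP ->; [|exact: P_nseq].
  have PV : P 2 1 v.
    by move: hv; rewrite !inE => /orP [] /eqP ->; [|exact: P_nseq].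
  by split; [exact: no_ov PU PV hs | exact: no_ov PV PU hs].
Qed.
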